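(* Fix $l^0_{jk},l^0_{ki},l^0_{ij}>0$ and let $\mathcal{W}^{ijk}$ be the set of $(w_i,w_j,w_k)\in\mathbb{R}^3$ for which $l_{ab}>0$ defined by $\cosh\frac{l_{ab}}{2}=e^{w_a+w_b}\cosh\frac{l^0_{ab}}{2}$ exist for $ab\in\{jk,ki,ij\}$. For $(w_i,w_j,w_k)\in\mathcal{W}^{ijk}$, let $\theta^i_{jk},\theta^j_{ki},\theta^k_{ij}$ be the lengths of the sides opposite to the sides of lengths $l_{jk},l_{ki},l_{ij}$ in the hyperbolic right-angled hexagon whose three pairwise non-adjacent sides have lengths $l_{jk},l_{ki},l_{ij}$. Then the Jacobian matrix $\frac{\partial(\theta^i_{jk},\theta^j_{ki},\theta^k_{ij})}{\partial(w_i,w_j,w_k)}$ is negative definite.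
   Context: For any three positive numbers there is a hyperbolic right-angled hexagon, unique up to isometry, whose three pairwise non-adjacent sides have these lengths. *)

(* Defs.v *)
From HB Require Import structures.
From mathcomp Require Import all_boot all_order all_algebra.
From mathcomp Require Import all_classical all_reals all_analysis.
Set Implicit Arguments. Unset Strict Implicit. Unset Printing Implicit Defensive.
Import Order.TTheory GRing.Theory Num.Theory.
Import numFieldNormedType.Exports.
Local Open Scope ring_scope.

Section Hyp.
Variable R : realType.

Definition cosh (x : R) : R := (expR x + expR (- x)) / 2.
Definition sinh (x : R) : R := (expR x - expR (- x)) / 2.
Definition acosh (x : R) : R := ln (x + Num.sqrt (x ^+ 2 - 1)).

(* Length of the side opposite to the side of length a in the hyperbolic
   right-angled hexagon whose three pairwise non-adjacent sides have lengths
   a, b, c (hyperbolic cosine law for right-angled hexagons). *)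
Definition hexagon_opp (a b c : R) : R :=
  acosh ((cosh b * cosh c + cosh a) / (sinh b * sinh c)).

Definition new_length (l0 wa wb : R) : R :=
  2 * acosh (expR (wa + wb) * cosh (l0 / 2)).

(* Index convention: coordinate 0 = i, 1 = j, 2 = k.
   l0jk, l0ki, l0ij are the initial lengths. *)
Definition W_ijk (l0jk l0ki l0ij : R) : set 'rV[R]_3 :=
  [set w | (exists l : R, 0 < l /\ cosh (l / 2) = expR (w 0 1 + w 0 2) * cosh (l0jk / 2)) /\
           (exists l : R, 0 < l /\ cosh (l / 2) = expR (w 0 2 + w 0 0) * cosh (l0ki / 2)) /\
           (exists l : R, 0 < l /\ cosh (l / 2) = expR (w 0 0 + w 0 1) * cosh (l0ij / 2))]%classic.

Definition theta_map (l0jk l0ki l0ij : R) (w : 'rV[R]_3) : 'rV[R]_3 :=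
  let ljk := new_length l0jk (w 0 1) (w 0 2) in
  let lki := new_length l0ki (w 0 2) (w 0 0) in
  let lij := new_length l0ij (w 0 0) (w 0 1) in
  \row_(a < 3) [:: hexagon_opp ljk lki lij;
                   hexagon_opp lki lij ljk;
                   hexagon_opp lij ljk lki]`_a.

Definition negative_definite n (A : 'M[R]_n) : Prop :=
  A^T = A /\ forall v : 'rV[R]_n, v != 0 -> (v *m A *m v^T) 0 0 < 0.

End Hyp.

(* Main.v *)
Require Import Defs.
From mathcomp Require Import all_boot all_order all_algebra.
From mathcomp Require Import all_classical all_reals all_analysis.
From mathcomp Require Import ring lra.
Import Order.TTheory GRing.Theory Num.Theory.
Import numFieldNormedType.Exports.
Local Open Scope ring_scope.

Set Implicit Arguments. Unset Strict Implicit.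

Section SA.
Variable R : realType.
Implicit Types (f g : R -> R) (t a b : R).

Lemma hcst t (c : R) : is_derive t 1 (fun _ : R => c) 0.
Proof. exact: is_derive_cst. Qed.

Lemma hid t : is_derive t 1 (fun x : R => x) 1.
Proof. exact: is_derive_id. Qed.

Lemma hadd f g t a b : is_derive t 1 f a -> is_derive t 1 g b ->
  is_derive t 1 (fun x => f x + g x) (a + b).
Proof. move=> Hf Hg; exact: (is_deriveD Hf Hg). Qed.

Lemma hopp f t a : is_derive t 1 f a -> is_derive t 1 (fun x => - f x) (- a).
Proof. move=> Hf; exact: (is_deriveN Hf). Qed.

Lemma hmul f g t a b : is_derive t 1 f a -> is_derive t 1 g b ->
  is_derive t 1 (fun x => f x * g x) (f t * b + g t * a).
Proof. move=> Hf Hg; have := is_deriveM Hf Hg. by []. Qed.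

Lemma hcomp f g t a b : is_derive (g t) 1 f a -> is_derive t 1 g b ->
  is_derive t 1 (fun x => f (g x)) (a * b).
Proof. move=> Hf Hg; exact: (is_derive1_comp Hf Hg). Qed.

Lemma hinv f t a : is_derive t 1 f a -> f t != 0 ->
  is_derive t 1 (fun x => (f x)^-1) (- a / (f t) ^+ 2).
Proof.
move=> Hf ft; apply: is_derive_eq (is_deriveV ft Hf) _.
rewrite /= [_ *: _]/(_ * _). by rewrite mulrC mulrN -mulNr.
Qed.

Lemma hexp f t a : is_derive t 1 f a -> is_derive t 1 (fun x => expR (f x)) (expR (f t) * a).
Proof. move=> Hf; apply: hcomp Hf; exact: is_derive_expR. Qed.

Lemma hln f t a : is_derive t 1 f a -> 0 < f t -> is_derive t 1 (fun x => ln (f x)) ((f t)^-1 * a).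
Proof. move=> Hf ft; apply: hcomp Hf; exact: is_derive1_ln. Qed.

Lemma hsqrt f t a : is_derive t 1 f a -> 0 < f t ->
  is_derive t 1 (fun x => Num.sqrt (f x)) ((2 * Num.sqrt (f t))^-1 * a).
Proof. move=> Hf ft; apply: hcomp Hf; exact: is_derive1_sqrt. Qed.

End SA.

Section SB.
Variable R : realType.
Implicit Types (f g : R -> R) (t a b : R).

Lemma coshE (x : R) : cosh x = (expR x + (expR x)^-1) / 2.
Proof. by rewrite /cosh expRN. Qed.
Lemma sinhE (x : R) : sinh x = (expR x - (expR x)^-1) / 2.
Proof. by rewrite /sinh expRN. Qed.

Lemma acosh_facts (z : R) : 1 < z ->
  let u := z + Num.sqrt (z ^+ 2 - 1) in
  [/\ 1 < u, z = (u + u^-1) / 2, Num.sqrt (z ^+ 2 - 1) = (u - u^-1) / 2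
    & expR (2 * acosh z) = u ^+ 2].
Proof.
move=> z1 u.
have r0 : 0 < z ^+ 2 - 1.
  by rewrite subr_gt0 -[1](expr1n _ 2) ltrXn2r // (lt_trans ltr01).
set r := Num.sqrt _ in u *.
have rp : 0 < r by rewrite sqrtr_gt0.
have rr : r ^+ 2 = z ^+ 2 - 1 by rewrite sqr_sqrtr // ltW.
have u1 : 1 < u by rewrite /u; lra.
have u0 : u != 0 by rewrite gt_eqF // (lt_trans ltr01).
have ui : u^-1 = z - r.
  apply: (mulfI u0); rewrite mulfV // /u.
  by transitivity (z ^+ 2 - r ^+ 2); [rewrite rr; ring | ring].
split => //.
- by rewrite ui /u; field.
- by rewrite ui /u; field.
- rewrite /acosh -/r -/u.
  by rewrite (expRM_natl 2) lnK // posrE (lt_trans ltr01).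
Qed.

End SB.

Section SC.
Variable R : realType.
Implicit Types (f g : R -> R) (t a b : R).

Lemma dcosh f t a : is_derive t 1 f a ->
  is_derive t 1 (fun x => cosh (f x)) (sinh (f t) * a).
Proof.
move=> Hf.
have H := hmul (hadd (hexp Hf) (hexp (hopp Hf))) (hcst t (2^-1 : R)).
apply: is_derive_eq H _; rewrite /sinh; field=> //.
Qed.

Lemma dsinh f t a : is_derive t 1 f a ->
  is_derive t 1 (fun x => sinh (f x)) (cosh (f t) * a).
Proof.
move=> Hf.
have H := hmul (hadd (hexp Hf) (hopp (hexp (hopp Hf)))) (hcst t (2^-1 : R)).
apply: is_derive_eq H _; rewrite /cosh; field=> //.
Qed.

Lemma dacosh f t a : is_derive t 1 f a -> 1 < f t ->
  is_derive t 1 (fun x => acosh (f x)) (a / Num.sqrt (f t ^+ 2 - 1)).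
Proof.
move=> Hf ft.
have r0 : 0 < f t ^+ 2 - 1.
  by rewrite subr_gt0 -[1](expr1n _ 2) ltrXn2r // (lt_trans ltr01).
set r := Num.sqrt _.
have rp : 0 < r by rewrite sqrtr_gt0.
have Hg := hadd (hmul Hf Hf) (hcst t (-1 : R)).
have p1 : 0 < (fun x => f x * f x - 1) t by rewrite /= -expr2.
have H1 := hsqrt Hg p1.
have H2 := hadd Hf H1.
have p : 0 < f t + Num.sqrt (f t * f t + -1) by rewrite -expr2 -/r; lra.
have H3 := hln H2 p.
apply: is_derive_eq H3 _.
rewrite -expr2 -/r /=.
have r1 : r != 0 by rewrite gt_eqF.
have r2 : f t + r != 0 by rewrite gt_eqF //; lra.
by field; rewrite r1 r2.
Qed.

End SC.

Section SD.
Variable R : realType.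
Implicit Types (f g : R -> R) (t : R).

Lemma hyp_pos (x : R) : 0 < x -> [/\ 1 < cosh x, 0 < sinh x & sinh x < cosh x].
Proof.
move=> x0; rewrite coshE sinhE.
have e1 : 1 < expR x by exact: pexpR_gt1.
have e0 : 0 < expR x by exact: expR_gt0.
have i0 : 0 < (expR x)^-1 by rewrite invr_gt0.
have i1 : (expR x)^-1 < 1 by rewrite invf_lt1.
have ei : expR x * (expR x)^-1 = 1 by rewrite mulfV // gt_eqF.
split; nra.
Qed.

Lemma dnl l0 p q t dp dq : is_derive t 1 p dp -> is_derive t 1 q dq ->
  1 < expR (p t + q t) * cosh (l0 / 2) ->
  is_derive t 1 (fun x => new_length l0 (p x) (q x))
    (2 * (expR (p t + q t) * cosh (l0 / 2) * (dp + dq))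
       / Num.sqrt ((expR (p t + q t) * cosh (l0 / 2)) ^+ 2 - 1)).
Proof.
move=> Hp Hq hz.
have H1 := hmul (hexp (hadd Hp Hq)) (hcst t (cosh (l0 / 2))).
have H2 := dacosh H1 hz.
have H3 := hmul (hcst t (2 : R)) H2.
apply: is_derive_eq H3 _ => /=; ring.
Qed.

Definition Gp (a b c da db dc : R) :=
  ((sinh b * db * cosh c + cosh b * (sinh c * dc) + sinh a * da) * (sinh b * sinh c)
   - (cosh b * cosh c + cosh a) * (cosh b * db * sinh c + sinh b * (cosh c * dc)))
  / (sinh b * sinh c) ^+ 2.

Definition Gv (a b c : R) := (cosh b * cosh c + cosh a) / (sinh b * sinh c).

Lemma Gv_gt1 a b c : 0 < a -> 0 < b -> 0 < c -> 1 < Gv a b c.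
Proof.
move=> /hyp_pos [a1 a2 a3] /hyp_pos [b1 b2 b3] /hyp_pos [c1 c2 c3].
rewrite /Gv ltr_pdivlMr; last exact: mulr_gt0.
rewrite mul1r.
have : sinh b * sinh c < cosh b * cosh c.
  apply: (@lt_trans _ _ (sinh b * cosh c)).
    by rewrite ltr_pM2l.
  by rewrite ltr_pM2r // (lt_trans ltr01).
lra.
Qed.

Lemma dhex (a b c : R -> R) t da db dc : is_derive t 1 a da -> is_derive t 1 b db ->
  is_derive t 1 c dc -> 0 < a t -> 0 < b t -> 0 < c t ->
  is_derive t 1 (fun x => hexagon_opp (a x) (b x) (c x))
    (Gp (a t) (b t) (c t) da db dc / Num.sqrt (Gv (a t) (b t) (c t) ^+ 2 - 1)).
Proof.
move=> Ha Hb Hc a0 b0 c0.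
have [_ sb _] := hyp_pos b0; have [_ sc _] := hyp_pos c0.
have Hn := hadd (hmul (dcosh Hb) (dcosh Hc)) (dcosh Ha).
have Hd := hmul (dsinh Hb) (dsinh Hc).
have nz : (sinh (b t) * sinh (c t)) != 0 by rewrite gt_eqF // mulr_gt0.
have Hdi := hinv Hd nz.
have HG := hmul Hn Hdi.
have HA := dacosh HG (Gv_gt1 a0 b0 c0).
apply: is_derive_eq HA _ => /=.
have g1 := Gv_gt1 a0 b0 c0.
have sq : 0 < Num.sqrt (Gv (a t) (b t) (c t) ^+ 2 - 1).
  rewrite sqrtr_gt0 subr_gt0; nra.
rewrite /Gv in sq.
by rewrite /Gp /Gv; field; rewrite !gt_eqF.
Qed.

End SD.

Section SE.
Variable R : realFieldType.

Definition Xu (u : R) := (u ^+ 2 + (u ^+ 2)^-1) / 2.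
Definition Su (u : R) := (u ^+ 2 - (u ^+ 2)^-1) / 2.
Definition dLu (u e : R) := 2 * ((u + u^-1) / 2 * e) / ((u - u^-1) / 2).
Definition GpX (xa sa xb sb xc sc da db dc : R) :=
  ((sb * db * xc + xb * (sc * dc) + sa * da) * (sb * sc)
   - (xb * xc + xa) * (xb * db * sc + sb * (xc * dc))) / (sb * sc) ^+ 2.
Definition Ndiag (xa xb xc : R) :=
  ((xc + xa * xb) * (xc - 1) + (xb + xa * xc) * (xb - 1)) / ((xb - 1) * (xc - 1)).
Definition Noff (xa xb xc : R) := ((xa - 1) + (xb - 1) - (xc - 1) + 2) / (xc - 1).

Lemma upos (u : R) : 1 < u ->
  [&& u != 0, u * u - 1 != 0, (u * u) ^+ 2 - 1 != 0
    & (u * u) ^+ 2 + 1 + -1 * (u ^+ 2 * 2) != 0].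
Proof.
move=> u1.
have p0 : 0 < u * u - 1 by nra.
have e1 : (u * u) ^+ 2 - 1 = (u * u - 1) * (u * u - 1 + 2) by ring.
have e2 : (u * u) ^+ 2 + 1 + -1 * (u ^+ 2 * 2) = (u * u - 1) * (u * u - 1) by ring.
rewrite e1 e2 !gt_eqF ?mulr_gt0 //; try lra.
Qed.

Lemma final_val (u0 u1 u2 SD v0 v1 v2 : R) :
  1 < u0 -> 1 < u1 -> 1 < u2 -> 0 < SD ->
  GpX (Xu u0) (Su u0) (Xu u1) (Su u1) (Xu u2) (Su u2)
      (dLu u0 (v1 + v2)) (dLu u1 (v2 + v0)) (dLu u2 (v0 + v1))
    / (SD / (Su u1 * Su u2))
  = - (2 / SD) * (Ndiag (Xu u0) (Xu u1) (Xu u2) * v0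
                  + Noff (Xu u0) (Xu u1) (Xu u2) * v1
                  + Noff (Xu u0) (Xu u2) (Xu u1) * v2).
Proof.
move=> h0 h1 h2 hS.
rewrite /GpX /Xu /Su /dLu /Ndiag /Noff.
field.
move: (upos h0) (upos h1) (upos h2) => /and4P[-> -> _ _] /and4P[-> -> -> ->] /and4P[-> -> -> ->].
by rewrite gt_eqF.
Qed.

Lemma pd3 (a b c d e f v0 v1 v2 : R) : 0 < a -> 0 < a * d - b ^+ 2 ->
  0 < a * (d * f - e ^+ 2) - b * (b * f - c * e) + c * (b * e - d * c) ->
  (v0 != 0) || (v1 != 0) || (v2 != 0) ->
  0 < a * v0 ^+ 2 + d * v1 ^+ 2 + f * v2 ^+ 2 + 2 * b * v0 * v1 + 2 * c * v0 * v2 + 2 * e * v1 * v2.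
Proof.
move=> ha hm hd hv.
set m := a * d - b ^+ 2.
set D := a * (d * f - e ^+ 2) - b * (b * f - c * e) + c * (b * e - d * c).
set Q := a * v0 ^+ 2 + d * v1 ^+ 2 + f * v2 ^+ 2 + 2 * b * v0 * v1 + 2 * c * v0 * v2 + 2 * e * v1 * v2.
have idQ : a * m * Q = m * (a * v0 + b * v1 + c * v2) ^+ 2
   + (m * v1 + (a * e - b * c) * v2) ^+ 2 + a * D * v2 ^+ 2.
  by rewrite /m /D /Q; ring.
have am : 0 < a * m by rewrite mulr_gt0.
rewrite -(pmulr_rgt0 _ am) idQ.
have sq (x : R) : x != 0 -> 0 < x ^+ 2.
  by move=> x0; rewrite lt_neqAle sqr_ge0 andbT eq_sym sqrf_eq0.
have [v20|v20] := eqVneq v2 0.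
  subst v2.
  have [v10|v10] := eqVneq v1 0.
    subst v1.
    move: hv; rewrite !eqxx !orbF => hv0.
    rewrite !(mulr0, addr0, expr0n) /=.
    by rewrite mulr_gt0 // sq // mulf_neq0 // gt_eqF.
  rewrite !(mulr0, addr0, expr0n) /= ?addr0.
  apply: ltr_wpDl; first by rewrite mulr_ge0 ?sqr_ge0 // ltW.
  by rewrite sq // mulf_neq0 // gt_eqF.
apply: ltr_wpDl.
  by apply: addr_ge0; [rewrite mulr_ge0 ?sqr_ge0 // ltW | rewrite sqr_ge0].
by rewrite mulr_gt0 ?sq // mulr_gt0.
Qed.

Ltac pospoly := repeat (apply: addr_gt0 || apply: mulr_gt0 || apply: exprn_gt0);
  try done; try (by rewrite ltr0n).

Definition Qform (x0 x1 x2 v0 v1 v2 : R) :=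
  v0 * (Ndiag x0 x1 x2 * v0 + Noff x0 x1 x2 * v1 + Noff x0 x2 x1 * v2)
  + v1 * (Ndiag x1 x2 x0 * v1 + Noff x1 x2 x0 * v2 + Noff x1 x0 x2 * v0)
  + v2 * (Ndiag x2 x0 x1 * v2 + Noff x2 x0 x1 * v0 + Noff x2 x1 x0 * v1).

Lemma Qpos (y0 y1 y2 v0 v1 v2 : R) : 0 < y0 -> 0 < y1 -> 0 < y2 ->
  (v0 != 0) || (v1 != 0) || (v2 != 0) ->
  0 < Qform (y0 + 1) (y1 + 1) (y2 + 1) v0 v1 v2.
Proof.
move=> h0 h1 h2 hv.
have n0 : y0 != 0 by rewrite gt_eqF.
have n1 : y1 != 0 by rewrite gt_eqF.
have n2 : y2 != 0 by rewrite gt_eqF.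
set a := Ndiag (y0 + 1) (y1 + 1) (y2 + 1).
set b := Noff (y0 + 1) (y1 + 1) (y2 + 1).
set c := Noff (y0 + 1) (y2 + 1) (y1 + 1).
set d := Ndiag (y1 + 1) (y2 + 1) (y0 + 1).
set e := Noff (y1 + 1) (y2 + 1) (y0 + 1).
set f := Ndiag (y2 + 1) (y0 + 1) (y1 + 1).
have -> : Qform (y0 + 1) (y1 + 1) (y2 + 1) v0 v1 v2 =
  a * v0 ^+ 2 + d * v1 ^+ 2 + f * v2 ^+ 2 + 2 * b * v0 * v1 + 2 * c * v0 * v2 + 2 * e * v1 * v2.
  rewrite /Qform -/a -/b -/c -/d -/e -/f.
  have -> : Noff (y1 + 1) (y0 + 1) (y2 + 1) = b by rewrite /b /Noff; congr (_ / _); ring.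
  have -> : Noff (y2 + 1) (y0 + 1) (y1 + 1) = c by rewrite /c /Noff; congr (_ / _); ring.
  have -> : Noff (y2 + 1) (y1 + 1) (y0 + 1) = e by rewrite /e /Noff; congr (_ / _); ring.
  ring.
apply: pd3 => //.
- rewrite /a /Ndiag !addrK divr_gt0 //; last by rewrite mulr_gt0.
  pospoly.
- have -> : a * d - b ^+ 2 = ((4%:R * y2) + (4%:R * y2^+2) + (y2^+3) + (4%:R * y1) + (8%:R * y1 * y2) + (3%:R * y1 * y2^+2) + (4%:R * y1^+2) + (3%:R * y1^+2 * y2) + (y1^+3) + (4%:R * y0) + (8%:R * y0 * y2) + (3%:R * y0 * y2^+2) + (16%:R * y0 * y1) + (14%:R * y0 * y1 * y2) + (4%:R * y0 * y1 * y2^+2) + (11%:R * y0 * y1^+2) + (6%:R * y0 * y1^+2 * y2) + (2%:R * y0 * y1^+3) + (4%:R * y0^+2) + (3%:R * y0^+2 * y2) + (11%:R * y0^+2 * y1) + (6%:R * y0^+2 * y1 * y2) + (4%:R * y0^+2 * y1^+2) + (4%:R * y0^+2 * y1^+2 * y2) + (y0^+3) + (2%:R * y0^+3 * y1)) / (y0 * y1 * y2).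
    by rewrite /a /b /d /Ndiag /Noff !addrK; field; rewrite n0 n1 n2.
  by rewrite divr_gt0 //; pospoly.
- have -> : a * (d * f - e ^+ 2) - b * (b * f - c * e) + c * (b * e - d * c) = ((32%:R) + (64%:R * y2) + (48%:R * y2^+2) + (16%:R * y2^+3) + (2%:R * y2^+4) + (64%:R * y1) + (96%:R * y1 * y2) + (48%:R * y1 * y2^+2) + (8%:R * y1 * y2^+3) + (48%:R * y1^+2) + (48%:R * y1^+2 * y2) + (12%:R * y1^+2 * y2^+2) + (16%:R * y1^+3) + (8%:R * y1^+3 * y2) + (2%:R * y1^+4) + (64%:R * y0) + (96%:R * y0 * y2) + (48%:R * y0 * y2^+2) + (8%:R * y0 * y2^+3) + (96%:R * y0 * y1) + (128%:R * y0 * y1 * y2) + (56%:R * y0 * y1 * y2^+2) + (8%:R * y0 * y1 * y2^+3) + (48%:R * y0 * y1^+2) + (56%:R * y0 * y1^+2 * y2) + (16%:R * y0 * y1^+2 * y2^+2) + (8%:R * y0 * y1^+3) + (8%:R * y0 * y1^+3 * y2) + (48%:R * y0^+2) + (48%:R * y0^+2 * y2) + (12%:R * y0^+2 * y2^+2) + (48%:R * y0^+2 * y1) + (56%:R * y0^+2 * y1 * y2) + (16%:R * y0^+2 * y1 * y2^+2) + (12%:R * y0^+2 * y1^+2) + (16%:R * y0^+2 * y1^+2 * y2) + (8%:R * y0^+2 * y1^+2 * y2^+2) + (16%:R * y0^+3) + (8%:R * y0^+3 * y2) + (8%:R * y0^+3 * y1) + (8%:R * y0^+3 * y1 * y2)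 + (2%:R * y0^+4)) / (y0 * y1 * y2).
    by rewrite /a /b /c /d /e /f /Ndiag /Noff !addrK; field; rewrite n0 n1 n2.
  by rewrite divr_gt0 //; pospoly.
Qed.

End SE.

Section SF.
Variable R : realType.

Definition EP (l0 wa wb u : R) := [/\ 1 < u, cosh (new_length l0 wa wb) = Xu u,
    sinh (new_length l0 wa wb) = Su u, 0 < new_length l0 wa wb &
    (expR (wa + wb) * cosh (l0 / 2) = (u + u^-1) / 2
  /\ Num.sqrt ((expR (wa + wb) * cosh (l0 / 2)) ^+ 2 - 1) = (u - u^-1) / 2)].

Lemma edge_facts (l0 wa wb : R) : 1 < expR (wa + wb) * cosh (l0 / 2) ->
  exists u, EP l0 wa wb u.
Proof.
move=> hz; have [u1 hzu hru he] := acosh_facts hz.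
set u := _ + _ in u1 hzu hru he.
exists u; split => //.
- by rewrite /new_length coshE he.
- by rewrite /new_length sinhE he.
- by rewrite /new_length mulr_gt0 // /acosh -/u ln_gt0.
Qed.

Definition Dx (x y z : R) := x ^+ 2 + y ^+ 2 + z ^+ 2 + 2 * x * y * z - 1.

Lemma Xu_gt1 (u : R) : 1 < u -> 1 < Xu u.
Proof.
move=> u1; rewrite /Xu.
have u0 : 0 < u by lra.
have p : 0 < u ^+ 2 - 1 by nra.
have e : (u ^+ 2 + (u ^+ 2)^-1) / 2 - 1 = (u ^+ 2 - 1) ^+ 2 / (2 * u ^+ 2).
  by field; rewrite gt_eqF.
rewrite -subr_gt0 e divr_gt0 // ?exprn_gt0 // mulr_gt0 // exprn_gt0 //.
Qed.

Lemma Su_gt0 (u : R) : 1 < u -> 0 < Su u.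
Proof.
move=> u1; rewrite /Su.
have u0 : 0 < u by lra.
have p : 0 < u ^+ 4 - 1.
  have : 1 < u ^+ 4 by rewrite exprn_egt1.
  lra.
have e : (u ^+ 2 - (u ^+ 2)^-1) / 2 = (u ^+ 4 - 1) / (2 * u ^+ 2).
  by field; rewrite gt_eqF.
by rewrite e divr_gt0 // mulr_gt0 // exprn_gt0.
Qed.

Lemma sig_u (ua ub uc : R) : 1 < ua -> 1 < ub -> 1 < uc ->
  Num.sqrt (((Xu ub * Xu uc + Xu ua) / (Su ub * Su uc)) ^+ 2 - 1)
  = Num.sqrt (Dx (Xu ua) (Xu ub) (Xu uc)) / (Su ub * Su uc).
Proof.
move=> ha hb hc.
have sb := Su_gt0 hb; have sc := Su_gt0 hc.
have q0 : 0 < Su ub * Su uc by rewrite mulr_gt0.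
have e : ((Xu ub * Xu uc + Xu ua) / (Su ub * Su uc)) ^+ 2 - 1
   = Dx (Xu ua) (Xu ub) (Xu uc) * ((Su ub * Su uc)^-1) ^+ 2.
  rewrite /Dx /Xu /Su; field.
  case/and4P: (upos ha) => a1 a2 a3 a4.
  case/and4P: (upos hb) => b1 b2 b3 b4.
  case/and4P: (upos hc) => c1 c2 c3 c4.
  by rewrite a1 b1 b3 c1 c3.
have xa := Xu_gt1 ha; have xb := Xu_gt1 hb; have xc := Xu_gt1 hc.
have d0 : 0 <= Dx (Xu ua) (Xu ub) (Xu uc).
  rewrite /Dx.
  have : 0 < Xu ua * Xu ub * Xu uc by apply: mulr_gt0; [apply: mulr_gt0|]; lra.
  nra.
rewrite e sqrtrM // sqrtr_sqr ger0_norm //.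
by rewrite invr_ge0 ltW.
Qed.

Lemma Dx_rot (x y z : R) : Dx y z x = Dx x y z.
Proof. rewrite /Dx; ring. Qed.

End SF.

Section SG.
Variable R : realType.

Definition P (w v : 'rV[R]_3) (k : 'I_3) (x : R) := x * v 0 k + w 0 k.

Lemma HP (w v : 'rV[R]_3) (k : 'I_3) (t : R) : is_derive t 1 (P w v k) (v 0 k).
Proof.
have H := hadd (hmul (hid t) (hcst t (v 0 k))) (hcst t (w 0 k)).
apply: is_derive_eq H _; rewrite /=; ring.
Qed.

Lemma P0 (w v : 'rV[R]_3) (k : 'I_3) : P w v k 0 = w 0 k.
Proof. by rewrite /P mul0r add0r. Qed.

Definition val0 (x0 x1 x2 SD v0 v1 v2 : R) :=
  - (2 / SD) * (Ndiag x0 x1 x2 * v0 + Noff x0 x1 x2 * v1 + Noff x0 x2 x1 * v2).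

Lemma dphi (la lb lc : R) (w v : 'rV[R]_3) (a1 a2 b1 b2 c1 c2 : 'I_3) :
  1 < expR (w 0 a1 + w 0 a2) * cosh (la / 2) ->
  1 < expR (w 0 b1 + w 0 b2) * cosh (lb / 2) ->
  1 < expR (w 0 c1 + w 0 c2) * cosh (lc / 2) ->
  forall ua ub uc, EP la (w 0 a1) (w 0 a2) ua -> EP lb (w 0 b1) (w 0 b2) ub ->
  EP lc (w 0 c1) (w 0 c2) uc ->
    is_derive (0 : R) (1 : R) (fun x : R => hexagon_opp (new_length la (P w v a1 x) (P w v a2 x))
                         (new_length lb (P w v b1 x) (P w v b2 x))
                         (new_length lc (P w v c1 x) (P w v c2 x)))
    (GpX (Xu ua) (Su ua) (Xu ub) (Su ub) (Xu uc) (Su uc)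
      (dLu ua (v 0 a1 + v 0 a2)) (dLu ub (v 0 b1 + v 0 b2)) (dLu uc (v 0 c1 + v 0 c2))
     / (Num.sqrt (Dx (Xu ua) (Xu ub) (Xu uc)) / (Su ub * Su uc))).
Proof.
move=> ha hb hc ua ub uc [ua1 cha sha pa [za ra]] [ub1 chb shb pb [zb rb]] [uc1 chc shc pc [zc rc]].
have ha' := ha; have hb' := hb; have hc' := hc.
rewrite -(P0 w v a1) -(P0 w v a2) in ha'.
rewrite -(P0 w v b1) -(P0 w v b2) in hb'.
rewrite -(P0 w v c1) -(P0 w v c2) in hc'.
have Ha := dnl (HP w v a1 0) (HP w v a2 0) ha'.
have Hb := dnl (HP w v b1 0) (HP w v b2 0) hb'.
have Hc := dnl (HP w v c1 0) (HP w v c2 0) hc'.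
have pa' := pa; have pb' := pb; have pc' := pc.
rewrite -(P0 w v a1) -(P0 w v a2) in pa'.
rewrite -(P0 w v b1) -(P0 w v b2) in pb'.
rewrite -(P0 w v c1) -(P0 w v c2) in pc'.
have H := dhex Ha Hb Hc pa' pb' pc'.
apply: is_derive_eq H _.
rewrite !P0 /Gp /Gv cha sha chb shb chc shc ra rb rc za zb zc.
by rewrite sig_u.
Qed.

End SG.

Section SH.
Variable R : realType.

Lemma derive_line (f : 'rV[R]_3 -> R) x v :
  'D_v f x = 'D_1 (fun h : R => f (h *: v + x)) 0.
Proof.
rewrite /derive; set g1 := fun h => h^-1 *: _; set g2 := fun h => h^-1 *: _.
suff -> : g1 = g2 by [].
by rewrite funeqE /g1 /g2 => h /=; rewrite addr0 scale0r add0r [_%:A]mulr1.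
Qed.

Lemma theta_line0 l0jk l0ki l0ij (w v : 'rV[R]_3) :
  (fun x : R => theta_map l0jk l0ki l0ij (x *: v + w) 0 0) =
  (fun x => hexagon_opp (new_length l0jk (P w v 1 x) (P w v 2 x))
                        (new_length l0ki (P w v 2 x) (P w v 0 x))
                        (new_length l0ij (P w v 0 x) (P w v 1 x))).
Proof. by apply/funext => x; rewrite /theta_map mxE /= !mxE. Qed.

Lemma theta_line1 l0jk l0ki l0ij (w v : 'rV[R]_3) :
  (fun x : R => theta_map l0jk l0ki l0ij (x *: v + w) 0 1) =
  (fun x => hexagon_opp (new_length l0ki (P w v 2 x) (P w v 0 x))
                        (new_length l0ij (P w v 0 x) (P w v 1 x))
                        (new_length l0jk (P w v 1 x) (P w v 2 x))).
Proof. by apply/funext => x; rewrite /theta_map mxE /= !mxE. Qed.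

Lemma theta_line2 l0jk l0ki l0ij (w v : 'rV[R]_3) :
  (fun x : R => theta_map l0jk l0ki l0ij (x *: v + w) 0 2) =
  (fun x => hexagon_opp (new_length l0ij (P w v 0 x) (P w v 1 x))
                        (new_length l0jk (P w v 1 x) (P w v 2 x))
                        (new_length l0ki (P w v 2 x) (P w v 0 x))).
Proof. by apply/funext => x; rewrite /theta_map mxE /= !mxE. Qed.

Lemma Dx_gt0 (u0 u1 u2 : R) : 1 < u0 -> 1 < u1 -> 1 < u2 ->
  0 < Num.sqrt (Dx (Xu u0) (Xu u1) (Xu u2)).
Proof.
move=> h0 h1 h2; rewrite sqrtr_gt0 /Dx.
have x0 := Xu_gt1 h0; have x1 := Xu_gt1 h1; have x2 := Xu_gt1 h2.
have : 0 < Xu u0 * Xu u1 * Xu u2 by apply: mulr_gt0; [apply: mulr_gt0|]; lra.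
nra.
Qed.

Lemma theta_D l0jk l0ki l0ij (w : 'rV[R]_3) :
  1 < expR (w 0 1 + w 0 2) * cosh (l0jk / 2) ->
  1 < expR (w 0 2 + w 0 0) * cosh (l0ki / 2) ->
  1 < expR (w 0 0 + w 0 1) * cosh (l0ij / 2) ->
  exists u0 u1 u2 : R, [/\ 1 < u0, 1 < u1, 1 < u2 &
    forall v : 'rV[R]_3,
    let SD := Num.sqrt (Dx (Xu u0) (Xu u1) (Xu u2)) in
    [/\ 'D_v (fun t => theta_map l0jk l0ki l0ij t 0 0) w
          = val0 (Xu u0) (Xu u1) (Xu u2) SD (v 0 0) (v 0 1) (v 0 2),
        'D_v (fun t => theta_map l0jk l0ki l0ij t 0 1) w
          = val0 (Xu u1) (Xu u2) (Xu u0) SD (v 0 1) (v 0 2) (v 0 0) &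
        'D_v (fun t => theta_map l0jk l0ki l0ij t 0 2) w
          = val0 (Xu u2) (Xu u0) (Xu u1) SD (v 0 2) (v 0 0) (v 0 1)]].
Proof.
move=> hz0 hz1 hz2.
have [u0 E0] := edge_facts hz0.
have [u1 E1] := edge_facts hz1.
have [u2 E2] := edge_facts hz2.
have u0g : 1 < u0 by case: E0.
have u1g : 1 < u1 by case: E1.
have u2g : 1 < u2 by case: E2.
exists u0, u1, u2; split => // v SD.
have SD0 : 0 < SD by exact: Dx_gt0.
split.
- rewrite derive_line theta_line0.
  have H := dphi v hz0 hz1 hz2 E0 E1 E2.
  case: H => _ ->.
  by rewrite -/SD final_val.
- rewrite derive_line theta_line1.
  have H := dphi v hz1 hz2 hz0 E1 E2 E0.
  case: H => _ ->.
  rewrite Dx_rot -/SD final_val //.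
- rewrite derive_line theta_line2.
  have H := dphi v hz2 hz0 hz1 E2 E0 E1.
  case: H => _ ->.
  rewrite (Dx_rot (Xu u1)) Dx_rot -/SD final_val //.
Qed.

End SH.

Section SI.
Variable R : realType.
Local Notation V := ('rV[R]_3).
Implicit Types (f g : V -> R) (x : V).

Lemma dif_comp1 (h : R -> R) f x : differentiable f x -> derivable h (f x) 1 ->
  differentiable (fun y => h (f y)) x.
Proof.
move=> df dh; have := differentiable_comp df (proj1 (derivable1_diffP h (f x)) dh).
by [].
Qed.

Lemma dif_add f g x : differentiable f x -> differentiable g x ->
  differentiable (fun y => f y + g y) x.
Proof. by move=> df dg; have := differentiableD df dg. Qed.

Lemma dif_mul f g x : differentiable f x -> differentiable g x ->
  differentiable (fun y => f y * g y) x.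
Proof. by move=> df dg; have := differentiableM df dg. Qed.

Lemma dif_inv f x : differentiable f x -> f x != 0 ->
  differentiable (fun y => (f y)^-1) x.
Proof. exact: differentiableV. Qed.

Lemma dif_cst (c : R) x : differentiable (fun _ : V => c) x.
Proof. exact: differentiable_cst. Qed.

Lemma dif_coord (k : 'I_3) x : differentiable (fun y : V => y 0 k) x.
Proof. exact: differentiable_coord. Qed.

Lemma der_cosh (z : R) : derivable (@cosh R) z 1.
Proof. by case: (dcosh (hid z)). Qed.
Lemma der_sinh (z : R) : derivable (@sinh R) z 1.
Proof. by case: (dsinh (hid z)). Qed.
Lemma der_acosh (z : R) : 1 < z -> derivable (@acosh R) z 1.
Proof. by move=> z1; case: (dacosh (hid z) z1). Qed.

Lemma dif_nl (l0 : R) (a b : 'I_3) x : 1 < expR (x 0 a + x 0 b) * cosh (l0 / 2) ->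
  differentiable (fun y : V => new_length l0 (y 0 a) (y 0 b)) x.
Proof.
move=> hz; rewrite /new_length.
apply: dif_mul; first exact: dif_cst.
apply: dif_comp1; last exact: der_acosh.
apply: dif_mul; last exact: dif_cst.
apply: dif_comp1; last exact: derivable_expR.
apply: dif_add; exact: dif_coord.
Qed.

Lemma dif_hex (A B C : V -> R) x : differentiable A x -> differentiable B x ->
  differentiable C x -> 0 < A x -> 0 < B x -> 0 < C x ->
  differentiable (fun y => hexagon_opp (A y) (B y) (C y)) x.
Proof.
move=> dA dB dC a0 b0 c0; rewrite /hexagon_opp.
apply: dif_comp1; last by apply: der_acosh; exact: (Gv_gt1 a0 b0 c0).
have [_ sb _] := hyp_pos b0; have [_ sc _] := hyp_pos c0.
apply: dif_mul.
  apply: dif_add; [apply: dif_mul|]; apply: dif_comp1 => //; exact: der_cosh.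
apply: dif_inv; last by rewrite gt_eqF // mulr_gt0.
apply: dif_mul; apply: dif_comp1 => //; exact: der_sinh.
Qed.

End SI.

Unset Implicit Arguments. Set Strict Implicit.

Lemma ord3 (i : 'I_3) : i = 0 \/ i = 1 \/ i = 2.
Proof.
case: i => [[|[|[|//]]]] Hi; [left|right;left|right;right]; exact/val_inj.
Qed.

Lemma lift1 : (lift ord0 ord0 : 'I_3) = 1. Proof. exact/val_inj. Qed.
Lemma lift2 : (lift ord0 (lift ord0 ord0) : 'I_3) = 2. Proof. exact/val_inj. Qed.

Lemma rowdec {R : ringType} (r : 'rV[R]_3) :
  r 0 0 *: delta_mx 0 0 + r 0 1 *: delta_mx 0 1 + r 0 2 *: delta_mx 0 2 = r.
Proof.
apply/rowP => j; rewrite !mxE.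
by case: (ord3 j) => [->|[->|->]]; rewrite /= ?mulr0 ?mulr1 ?addr0 ?add0r.
Qed.

Lemma dDv {R : realType} (f g : 'rV[R]_3 -> 'rV[R]_3) w : differentiable f w -> differentiable g w ->
      differentiable (fun t => f t + g t) w.
Proof. by move=> df dg; have := differentiableD df dg. Qed.

Theorem lemma3 (R : realType) (l0jk l0ki l0ij : R) :
  0 < l0jk -> 0 < l0ki -> 0 < l0ij ->
  forall w : 'rV[R]_3, w \in W_ijk l0jk l0ki l0ij ->
    differentiable (theta_map l0jk l0ki l0ij) w /\
    negative_definite ('J (theta_map l0jk l0ki l0ij) w).
Proof.
move=> _ _ _ w; rewrite inE => -[[l0 [lp0 ch0]] [[l1 [lp1 ch1]] [l2 [lp2 ch2]]]].
have hz (l z : R) : 0 < l -> cosh (l / 2) = z -> 1 < z.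
  move=> lp <-; have lh : 0 < l / 2 by lra.
  by case: (hyp_pos lh).
have hz0 := hz _ _ lp0 ch0; have hz1 := hz _ _ lp1 ch1; have hz2 := hz _ _ lp2 ch2.
have [u0 [_ _ _ p0 _]] := edge_facts hz0.
have [u1 [_ _ _ p1 _]] := edge_facts hz1.
have [u2 [_ _ _ p2 _]] := edge_facts hz2.
set th := theta_map l0jk l0ki l0ij.
have e0 : (fun t => th t 0 0) = (fun t => hexagon_opp (new_length l0jk (t 0 1) (t 0 2))
            (new_length l0ki (t 0 2) (t 0 0)) (new_length l0ij (t 0 0) (t 0 1))).
  by apply/funext => t; rewrite /th /theta_map mxE.
have e1 : (fun t => th t 0 1) = (fun t => hexagon_opp (new_length l0ki (t 0 2) (t 0 0))
            (new_length l0ij (t 0 0) (t 0 1)) (new_length l0jk (t 0 1) (t 0 2))).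
  by apply/funext => t; rewrite /th /theta_map mxE.
have e2 : (fun t => th t 0 2) = (fun t => hexagon_opp (new_length l0ij (t 0 0) (t 0 1))
            (new_length l0jk (t 0 1) (t 0 2)) (new_length l0ki (t 0 2) (t 0 0))).
  by apply/funext => t; rewrite /th /theta_map mxE.
have d0 : differentiable (fun t => th t 0 0) w.
  by rewrite e0; apply: dif_hex => //; apply: dif_nl.
have d1 : differentiable (fun t => th t 0 1) w.
  by rewrite e1; apply: dif_hex => //; apply: dif_nl.
have d2 : differentiable (fun t => th t 0 2) w.
  by rewrite e2; apply: dif_hex => //; apply: dif_nl.
have dec : th = (fun t => th t 0 0 *: (delta_mx 0 0 : 'rV[R]_3)
                   + th t 0 1 *: delta_mx 0 1 + th t 0 2 *: delta_mx 0 2).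
  by apply/funext => t; exact: (esym (rowdec (th t))).
have dth : differentiable th w.
  rewrite {1}dec. apply: dDv. apply: dDv.
  - exact: (differentiableZl (delta_mx 0 0 : 'rV[R]_3) d0).
  - exact: (differentiableZl (delta_mx 0 1 : 'rV[R]_3) d1).
  - exact: (differentiableZl (delta_mx 0 2 : 'rV[R]_3) d2).
split => //.
have Dent v j : ('D_v th w) 0 j = 'D_v (fun t => th t 0 j) w.
  by rewrite derive_mx ?mxE //; exact: diff_derivable.
have [q0 [q1 [q2 [hq0 hq1 hq2 HD]]]] := theta_D hz0 hz1 hz2.
set SD := Num.sqrt (Dx (Xu q0) (Xu q1) (Xu q2)) in HD.
have SD0 : 0 < SD by exact: Dx_gt0.
have Jent i j : 'J th w i j = 'D_(delta_mx 0 i) (fun t => th t 0 j) w.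
  by rewrite /jacobian mxE -deriveE // Dent.
split.
  apply/matrixP => i j; rewrite mxE !Jent.
  have [a0 a1 a2] := HD (delta_mx 0 0).
  have [b0 b1 b2] := HD (delta_mx 0 1).
  have [c0 c1 c2] := HD (delta_mx 0 2).
  case: (ord3 i) => [->|[->|->]]; case: (ord3 j) => [->|[->|->]];
  rewrite ?a0 ?a1 ?a2 ?b0 ?b1 ?b2 ?c0 ?c1 ?c2;
  by rewrite /val0 /Noff /Ndiag !mxE /=; ring.
move=> v vn0.
rewrite -deriveEjacobian // mxE !big_ord_recl big_ord0 lift1 lift2 !mxE !Dent.
have [-> -> ->] := HD v.
have vnz : (v 0 0 != 0) || (v 0 1 != 0) || (v 0 2 != 0).
  apply: contraNT vn0; rewrite !negb_or !negbK => /andP[/andP[/eqP a /eqP b] /eqP c].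
  apply/eqP/rowP => j; rewrite mxE.
  by case: (ord3 j) => [->|[->|->]].
have y0 : 0 < Xu q0 - 1 by rewrite subr_gt0 Xu_gt1.
have y1 : 0 < Xu q1 - 1 by rewrite subr_gt0 Xu_gt1.
have y2 : 0 < Xu q2 - 1 by rewrite subr_gt0 Xu_gt1.
have Q := Qpos y0 y1 y2 vnz.
rewrite !subrK in Q.
set LHS := (X in X < 0).
have -> : LHS = - (2 / SD) * Qform (Xu q0) (Xu q1) (Xu q2) (v 0 0) (v 0 1) (v 0 2).
  by rewrite /LHS /val0 /Qform; ring.
by rewrite mulNr oppr_lt0 mulr_gt0 // divr_gt0.
Qed.
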